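(* Let $d<l$ be positive integers. Let $Y=(\beta\mathbb{N})^l$ with the product topology and coordinatewise operation, and let $S_o=\{(P(1),\ldots,P(l)) : P(x)=\sum_{k=0}^d a_kx^k,\ a_0,\ldots,a_d\in\omega\}$ and $I_o=\{(P(1),\ldots,P(l)) : P(x)=\sum_{k=0}^d a_kx^k,\ a_0,\ldots,a_d\in\mathbb{N}\}$, viewed as subsets of $Y$. Then $S=\mathrm{cl}_Y(S_o)$ is a subsemigroup of $Y$, $I=\mathrm{cl}_Y(I_o)$ is an ideal of $S$, and for every $p\in K(\beta\mathbb{N})$ the constant tuple $(p,p,\ldots,p)$ belongs to $K(S)$ and hence to $I$.
   Context: $\omega=\{0,1,2,\ldots\}$, $\mathbb{N}=\{1,2,\ldots\}$. $\beta\mathbb{N}$ is the Stone–Čech compactification of the discrete space $\mathbb{N}$ (ultrafilters on $\mathbb{N}$), with the usual extension of addition making it a compact right topological semigroup; $\mathbb{N}$ is identified with the principal ultrafilters. $K(T)$ denotes the smallest two-sided ideal of a compact right topological semigroup $T$. *)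

(* Defs.v *)
From mathcomp Require Import all_boot.
From mathcomp Require Export classical_sets.
Set Implicit Arguments. Unset Strict Implicit. Unset Printing Implicit Defensive.
Local Open Scope classical_set_scope.

Definition posN : set nat := [set n | (0 < n)%N].

(* Ultrafilters on N, represented as ultrafilters on nat containing N.
   betaN is the set of these. *)
Definition is_ultra (U : set (set nat)) : Prop :=
  [/\ U posN, ~ U set0,
      (forall A B, U A -> A `<=` B -> U B),
      (forall A B, U A -> U B -> U (A `&` B)) &
      (forall A, U A \/ U (~` A))].

Definition betaN : set (set (set nat)) := [set p | is_ultra p].

Definition pr (n : nat) : set (set nat) := [set A | A n].

Definition bplus (p q : set (set nat)) : set (set nat) :=
  [set A | p [set x | q [set y | A (x + y)%N]]].

(* Y = (betaN)^l, points indexed by coordinates 1..l (as 'I_l, coordinate i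
   standing for i.+1) *)
Definition Yset (l : nat) : set ('I_l -> set (set nat)) :=
  [set y | forall i, is_ultra (y i)].
Arguments Yset : clear implicits.

Definition Yplus (l : nat) (y z : 'I_l -> set (set nat)) : 'I_l -> set (set nat) :=
  fun i => bplus (y i) (z i).

(* closure in the product topology (basic open sets prod_i {p | A_i \in p}) *)
Definition Ycl (l : nat) (X : set ('I_l -> set (set nat))) :
    set ('I_l -> set (set nat)) :=
  [set y | Yset l y /\
     forall A : 'I_l -> set nat, (forall i, y i (A i)) ->
       exists2 x, X x & forall i, x i (A i)].

Definition is_subsemigroup (T : Type) (op : T -> T -> T) (U S : set T) : Prop :=
  [/\ S !=set0, S `<=` U & forall x y, S x -> S y -> S (op x y)].

Definition is_ideal (T : Type) (op : T -> T -> T) (S J : set T) : Prop :=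
  [/\ J !=set0, J `<=` S &
      forall x y, S x -> J y -> J (op x y) /\ J (op y x)].

Definition smallest_ideal (T : Type) (op : T -> T -> T) (S : set T) : set T :=
  [set x | forall J, is_ideal op S J -> J x].

Definition poly_tuple (d l : nat) (a : 'I_d.+1 -> nat) : 'I_l -> set (set nat) :=
  fun i => pr (\sum_(k < d.+1) a k * (i.+1) ^ k)%N.

(* S_o : coefficients in omega; the zero polynomial is excluded since
   (0,...,0) is not a point of Y *)
Definition So (d l : nat) : set ('I_l -> set (set nat)) :=
  [set y | exists a : 'I_d.+1 -> nat, (exists k, (0 < a k)%N) /\ y = @poly_tuple d l a].

Definition Io (d l : nat) : set ('I_l -> set (set nat)) :=
  [set y | exists a : 'I_d.+1 -> nat, (forall k, (0 < a k)%N) /\ y = @poly_tuple d l a].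

Arguments So : clear implicits.
Arguments Io : clear implicits.
Arguments Ycl : clear implicits.
Arguments Yplus : clear implicits.
Arguments poly_tuple : clear implicits.

(* Main.v *)
Require Import Defs.
From mathcomp Require Import all_boot classical_sets boolp filter.
Set Implicit Arguments. Unset Strict Implicit. Unset Printing Implicit Defensive.
Local Open Scope classical_set_scope.

Lemma ultra_mono u A B : is_ultra u -> u A -> A `<=` B -> u B.
Proof. by case=> _ _ h _ _ uA AB; exact: h uA AB. Qed.

Lemma ultra_I u A B : is_ultra u -> u A -> u B -> u (A `&` B).
Proof. by case=> _ _ _ h _; exact: h. Qed.

Lemma ultra_T u : is_ultra u -> u setT.
Proof. move=> uu; have h : u posN by case: uu. exact: ultra_mono uu h (fun _ _ => I). Qed.

Lemma ultra_pos u : is_ultra u -> u posN.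
Proof. by case. Qed.

Lemma ultra_n0 u : is_ultra u -> ~ u set0.
Proof. by case. Qed.

Lemma ultra_C u A : is_ultra u -> u A \/ u (~` A).
Proof. by case=> _ _ _ _; apply. Qed.

Lemma ultra_neg u A : is_ultra u -> ~ u A -> u (~` A).
Proof. by move=> uu nA; case: (ultra_C A uu). Qed.

Lemma ultra_ex u A : is_ultra u -> u A -> exists n, A n.
Proof.
move=> uu uA; apply: contrapT => h; apply: (ultra_n0 uu).
by apply: ultra_mono uu uA _ => n An; apply: h; exists n.
Qed.

Lemma ultra_eq u v : is_ultra u -> is_ultra v -> (forall A, u A -> v A) -> u = v.
Proof.
move=> uu vv uv; apply/seteqP; split => // A vA.
apply: contrapT => nuA; have := uv _ (ultra_neg uu nuA) => vnA.
by apply: (ultra_n0 vv); rewrite -(setICr A); exact: ultra_I.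
Qed.

Lemma bplus_ultra p q : is_ultra p -> is_ultra q -> is_ultra (bplus p q).
Proof.
move=> pp qq; split.
- apply: ultra_mono pp (ultra_T pp) _ => x _ /=.
  apply: ultra_mono qq (ultra_pos qq) _ => y /= y0.
  by rewrite /posN /= addn_gt0 y0 orbT.
- move=> h; apply: (ultra_n0 pp); apply: ultra_mono pp h _ => x /= hx.
  by apply: (ultra_n0 qq); apply: ultra_mono qq hx _.
- move=> A B hA AB; apply: ultra_mono pp hA _ => x /= hx.
  by apply: ultra_mono qq hx _ => y /=; apply: AB.
- move=> A B hA hB; apply: ultra_mono pp (ultra_I pp hA hB) _ => x /= [h1 h2].
  exact: ultra_I qq h1 h2.
- move=> A; case: (ultra_C [set x | q [set y | A (x + y)%N]] pp) => h; [left|right] => //.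
  apply: ultra_mono pp h _ => x /= nx; exact: ultra_neg qq nx.
Qed.

Lemma bplusA p q r : bplus (bplus p q) r = bplus p (bplus q r).
Proof.
rewrite /bplus; apply: funext => A /=; congr p; apply: funext => x /=.
congr q; apply: funext => y /=; congr r; apply: funext => z /=.
by rewrite addnA.
Qed.

Lemma pr_ultra n : (0 < n)%N -> is_ultra (pr n).
Proof.
move=> n0; split => //=.
- by move=> A B hA AB; exact: AB.
- by move=> A; case: (pselect (A n)) => h; [left|right].
Qed.

Lemma filt_bigI (X : Type) (I : finType) (F : set (set X)) (P : I -> set X) :
  F setT -> (forall A B, F A -> F B -> F (A `&` B)) ->
  (forall A B, F A -> A `<=` B -> F B) ->
  (forall i, F (P i)) -> F [set x | forall i, P i x].
Proof.
move=> FT FI FS FP.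
suff : forall s : seq I, F [set x | forall i, i \in s -> P i x].
  by move=> /(_ (enum I)) h; apply: FS h _ => x h i; apply: h; rewrite mem_enum.
elim => [|i s IH].
  by apply: FS FT _ => x _ i.
apply: FS (FI _ _ (FP i) IH) _ => x [h1 h2] j; rewrite inE => /orP[/eqP->|js] //.
exact: h2.
Qed.

Lemma ultra_bigI (I : finType) u (P : I -> set nat) :
  is_ultra u -> (forall i, u (P i)) -> u [set x | forall i, P i x].
Proof.
move=> uu; apply: filt_bigI; [exact: ultra_T | move=> A B h1 h2; exact: (ultra_I uu h1 h2) | move=> A B h1 h2; exact: (ultra_mono uu h1 h2)].
Qed.

Lemma minimal_ex (X : Type) (P : set (set X)) A0 : P A0 ->
  (forall F, F !=set0 -> F `<=` P -> total_on F (fun A B => A `<=` B) ->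
     P (\bigcap_(C in F) C)) ->
  exists2 B, P B & forall B', P B' -> B' `<=` B -> B = B'.
Proof.
move=> PA0 Pch.
pose S := {A : set X | P A}.
pose R : rel S := fun a b => `[< sval b `<=` sval a >].
have [t tmax] : exists t, forall s, R t s -> s = t.
  apply: Zorn.
  - by move=> t; apply/asboolP.
  - move=> r s t /asboolP h1 /asboolP h2; apply/asboolP; exact: subset_trans h2 h1.
  - move=> [a pa] [b pb] /asboolP h1 /asboolP h2; apply: eq_exist.
    by apply/seteqP; split.
  - move=> A Atot; have [[s0 As0]|A0'] := pselect (A !=set0); last first.
      exists (exist _ A0 PA0) => s As; exfalso; apply: A0'; by exists s.
    pose F := [set C | exists2 s, A s & sval s = C].
    have PF : P (\bigcap_(C in F) C).
      apply: Pch.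
      - by exists (sval s0); exists s0.
      - by move=> C [s _ <-]; exact: (svalP s).
      - move=> C D [s As <-] [t At <-]; have [/asboolP h|/asboolP h] := Atot _ _ As At.
          by right.
        by left.
    exists (exist _ _ PF) => s As; apply/asboolP => x /= hx; apply: hx.
    by exists s.
exists (sval t); first exact: (svalP t).
move=> B' PB' sB.
have e : exist _ B' PB' = t by apply: tmax; apply/asboolP; exact: sB.
by rewrite -e.
Qed.

Section Y.
Variable l : nat.
Local Notation T := ('I_l -> set (set nat)).
Local Notation add := (Yplus l).

Definition closedY (C : set T) := C `<=` Yset l /\ Ycl l C `<=` C.

Lemma YplusA x y z : add (add x y) z = add x (add y z).
Proof. by apply: funext => i; rewrite /Yplus bplusA. Qed.

Lemma Yplus_set x y : Yset l x -> Yset l y -> Yset l (add x y).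
Proof. by move=> hx hy i; apply: bplus_ultra. Qed.

Lemma Ycl_mono (X X' : set T) : X `<=` X' -> Ycl l X `<=` Ycl l X'.
Proof.
move=> XX y [hy h]; split => // A /h [x Xx hx]; exists x => //; exact: XX.
Qed.

Lemma Ycl_sub (X : set T) : X `<=` Yset l -> X `<=` Ycl l X.
Proof. by move=> XY x Xx; split; [exact: XY|move=> A h; exists x]. Qed.

Lemma Ycl_closed (X : set T) : closedY (Ycl l X).
Proof.
split; first by move=> y [].
move=> y [hy h]; split => // A /h [x [_ hx] xA]; exact: hx.
Qed.

Lemma closedI (C D : set T) : closedY C -> closedY D -> closedY (C `&` D).
Proof.
move=> [C1 C2] [D1 D2]; split; first by move=> x [/C1].
move=> y hy; split; [apply: C2|apply: D2]; apply: Ycl_mono hy; by move=> ? [].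
Qed.

Lemma closed_bigcap (F : set (set T)) : F !=set0 -> (forall C, F C -> closedY C) ->
  closedY (\bigcap_(C in F) C).
Proof.
move=> [C0 FC0] FC; split; first by move=> x /(_ C0 FC0); apply: (FC _ FC0).1.
move=> y hy C FC'; apply: (FC _ FC').2; apply: Ycl_mono hy; by move=> x /(_ C FC').
Qed.

Definition nb (i : 'I_l) (A : set nat) : 'I_l -> set nat :=
  fun j => if j == i then A else setT.

Lemma nb_in (y : T) i A : Yset l y -> y i A -> forall j, y j (nb i A j).
Proof. by move=> hy hA j; rewrite /nb; case: eqP => [->//|_]; exact: ultra_T. Qed.

Lemma nb_at (y : T) i A : (forall j, y j (nb i A j)) -> y i A.
Proof. by move/(_ i); rewrite /nb eqxx. Qed.

Lemma basic_closed (A : 'I_l -> set nat) :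
  closedY [set y | Yset l y /\ forall i, y i (A i)].
Proof.
split; first by move=> y [].
move=> y [hy h]; split => // i; apply: contrapT => nA.
have := h (nb i (~` A i)) (nb_in hy (ultra_neg (hy i) nA)).
move=> [x [hx xA]] /nb_at xnA.
by apply: (ultra_n0 (hx i)); rewrite -(setICr (A i)); apply: ultra_I (hx i) (xA i) xnA.
Qed.

Lemma compactY (F : set (set T)) : F !=set0 ->
  (forall C, F C -> closedY C /\ C !=set0) ->
  (forall C1 C2, F C1 -> F C2 -> exists2 C3, F C3 & C3 `<=` C1 `&` C2) ->
  exists y, forall C, F C -> C y.
Proof.
move=> [C0 FC0] FC Fd.
pose G := [set P : set T | exists2 C, F C & C `<=` P].
have GF : ProperFilter G.
  split.
    move=> [C FC' C0']; have [_ [x Cx]] := FC _ FC'; exact: C0' _ Cx.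
  split.
  - by exists C0.
  - move=> P Q [C1 F1 s1] [C2 F2 s2]; have [C3 F3 s3] := Fd _ _ F1 F2.
    by exists C3 => // x /s3 [/s1 ? /s2 ?].
  - by move=> P Q PQ [C FC' s]; exists C => //; apply: subset_trans PQ.
have [U [UU GU]] := ultraFilterLemma GF.
have UC : forall C, F C -> U C by move=> C FC'; apply: GU; exists C.
pose y : T := fun i => [set A | U [set x : T | x i A]].
have yU : Yset l y.
  move=> i; rewrite /y /=; have [[C1 _] _] := FC _ FC0; split.
  - by apply: filterS _ (UC _ FC0) => x /C1 /(_ i) /ultra_pos.
  - move=> h; have h' : U [set x : T | x i set0] := h.
    apply: (filter_not_empty U).
    apply: filterS _ (filterI h' (UC _ FC0)) => x [h1 /C1 /(_ i) h2].
    exact: (ultra_n0 h2).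
  - move=> A B hA AB; have {}hA : U [set x : T | x i A] := hA.
    change (U [set x : T | x i B]).
    apply: filterS _ (filterI hA (UC _ FC0)) => x [hx /C1 /(_ i) h3].
    exact: ultra_mono h3 hx AB.
  - move=> A B hA hB; have {}hA : U [set x : T | x i A] := hA.
    have {}hB : U [set x : T | x i B] := hB.
    change (U [set x : T | x i (A `&` B)]).
    apply: filterS _ (filterI (filterI hA hB) (UC _ FC0)).
    by move=> x [[h1 h2] /C1 /(_ i) h3]; apply: ultra_I h3 h1 h2.
  - move=> A; have [h|h] := in_ultra_setVsetC [set x : T | x i A] UU; first by left.
    right; change (U [set x : T | x i (~` A)]).
    apply: filterS _ (filterI h (UC _ FC0)) => x [h1 /C1 /(_ i) h3].
    exact: ultra_neg h3 h1.
exists y => C FC'; have [[C1 C2] _] := FC _ FC'; apply: C2; split => // A hA.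
have : U [set x : T | forall i, x i (A i)].
  apply: filt_bigI => //; [exact: filterT | move=> ? ? ; exact: filterI | move=> ? ? h1 h2; exact: filterS h2 h1].
move=> /filterI /(_ (UC _ FC')) /filter_ex [x [h1 h2]].
by exists x.
Qed.

Lemma rtrans_closed (C : set T) x : closedY C -> Yset l x ->
  closedY [set add c x | c in C].
Proof.
move=> [C1 C2] hx; split.
  by move=> _ [c Cc <-]; exact: Yplus_set (C1 _ Cc) hx.
move=> y [hy hcl].
pose D A := C `&` [set c | Yset l c /\ forall i, add c x i (A i)].
pose F := [set E : set T | exists2 A : 'I_l -> set nat, (forall i, y i (A i)) & E = D A].
have [b hb] : exists b, forall E, F E -> E b.
  apply: compactY.
  - by exists (D (fun _ => setT)); exists (fun _ => setT) => // i; exact: ultra_T.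
  - move=> E [A hA ->]; split.
      apply: closedI; first by split.
      exact: (basic_closed (fun i => [set n | x i [set m | A i (n + m)%N]])).
    have [z [c Cc <-] hz] := hcl A hA.
    exists c; split; [exact: Cc | split; [exact: C1 | exact: hz]].
  - move=> E1 E2 [A1 h1 ->] [A2 h2 ->]; exists (D (fun i => A1 i `&` A2 i)).
      by exists (fun i => A1 i `&` A2 i) => // i; exact: ultra_I.
    move=> c [Cc [hc hA]]; split; (split; [exact: Cc | split; [exact: hc |
      move=> i; apply: ultra_mono (bplus_ultra (hc i) (hx i)) (hA i) _; by move=> ? []]]).
have [Cb [hbY _]] : D (fun _ => setT) b.
  by apply: hb; exists (fun _ => setT) => // i; exact: ultra_T.
exists b => //; apply: funext => i.
symmetry; apply: ultra_eq; [exact: hy| exact: bplus_ultra|] => A hA.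
have [_ [_ h]] : D (nb i A) b by apply: hb; exists (nb i A) => //; exact: nb_in.
exact: nb_at h.
Qed.

Lemma fix_closed x : Yset l x -> closedY [set y | Yset l y /\ add y x = x].
Proof.
move=> hx; split; first by move=> y [].
move=> y [hy hcl]; split => //; apply: funext => i.
apply: ultra_eq; [exact: bplus_ultra|exact: hx|] => A hA.
have [z [hz ez] hzn] := hcl _ (nb_in hy hA).
have := nb_at hzn; rewrite -[x in x i A]ez; exact.
Qed.

Definition subsg (U : set T) := forall x y, U x -> U y -> U (add x y).

Lemma chain_nonempty (F : set (set T)) : F !=set0 ->
  (forall C, F C -> closedY C /\ C !=set0) ->
  total_on F (fun A B => A `<=` B) -> (\bigcap_(C in F) C) !=set0.
Proof.
move=> Fn FC Ftot.
have [y hy] : exists y, forall C, F C -> C y.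
  apply: compactY => // C1 C2 F1 F2; have [h|h] := Ftot _ _ F1 F2.
    by exists C1 => // x hx; split => //; exact: h.
  by exists C2 => // x hx; split => //; exact: h.
by exists y.
Qed.

Lemma ellis U : closedY U -> U !=set0 -> subsg U -> exists2 e, U e & add e e = e.
Proof.
move=> cU nU sU.
pose P := [set B | [/\ B `<=` U, closedY B, B !=set0 & subsg B]].
have [B [BU cB nB sB] Bmin] : exists2 B, P B & forall B', P B' -> B' `<=` B -> B = B'.
  apply: (minimal_ex (A0:=U)); first by split.
  move=> F Fn FP Ftot; split.
  - move=> x hx; have [C0 FC0] := Fn; have [h _ _ _] := FP _ FC0; exact: h _ (hx _ FC0).
  - by apply: closed_bigcap => // C /FP [].
  - by apply: chain_nonempty => // C /FP [].
  - by move=> x y hx hy C FC; have [_ _ _ h] := FP _ FC; apply: h; [exact: hx|exact: hy].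
have [x Bx] := nB.
have xY : Yset l x by apply: cB.1.
have eB : B = [set add b x | b in B].
  apply: Bmin.
    split.
    - by move=> _ [b Bb <-]; apply: BU; exact: sB.
    - exact: rtrans_closed.
    - by exists (add x x); exists x.
    - move=> _ _ [b Bb <-] [b' Bb' <-]; exists (add (add b x) b'); first by apply: (sB) => //; exact: sB.
      by rewrite YplusA.
  by move=> _ [b Bb <-]; exact: sB.
pose Z := B `&` [set y | Yset l y /\ add y x = x].
have eZ : B = Z.
  apply: Bmin; last by move=> ? [].
  split.
  - by move=> y [/BU].
  - by apply: closedI => //; exact: fix_closed.
  - have : [set add b x | b in B] x by rewrite -eB.
    move=> [b Bb e]; exists b; split => //; split => //; exact: cB.1.
  - move=> y z [By [yY ey]] [Bz [zY ez]]; split; first exact: sB.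
    by split; [exact: Yplus_set | rewrite YplusA ez ey].
have : Z x by rewrite -eZ.
by move=> [_ [_ h]]; exists x => //; exact: BU.
Qed.

Lemma min_idem U e : closedY U -> subsg U -> U e -> add e e = e ->
  exists q, [/\ U q, add q q = q, add q e = q, add e q = q &
    (forall f, U f -> add f f = f -> add f q = f -> add q f = f -> f = q) /\
    (forall J, is_ideal add U J -> J q)].
Proof.
move=> cU sU Ue ee.
have eY : Yset l e by apply: cU.1.
pose lid (L : set T) := forall u y, U u -> L y -> L (add u y).
pose P := [set L | [/\ L `<=` [set add u e | u in U], closedY L, L !=set0 & lid L]].
have PUe : P [set add u e | u in U].
  split => //.
  - exact: rtrans_closed.
  - by exists (add e e); exists e.
  - move=> u _ hu [v hv <-]; exists (add u v); first exact: sU.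
    by rewrite YplusA.
have [L [LUe cL nL lL] Lmin] : exists2 B, P B & forall B', P B' -> B' `<=` B -> B = B'.
  apply: (minimal_ex PUe).
  move=> F Fn FP Ftot; split.
  - move=> x hx; have [C0 FC0] := Fn; have [h _ _ _] := FP _ FC0; exact: h _ (hx _ FC0).
  - by apply: closed_bigcap => // C /FP [].
  - by apply: chain_nonempty => // C /FP [].
  - by move=> u y hu hy C FC; have [_ _ _ h] := FP _ FC; apply: h; [exact: hu|exact: hy].
have LU : L `<=` U by move=> x /LUe [u hu <-]; exact: sU.
have Lm : forall x, L x -> L `<=` [set add u x | u in U].
  move=> x Lx; suff -> : L = [set add u x | u in U] by [].
  apply: Lmin; last by move=> _ [u hu <-]; exact: lL.
  split.
  - by move=> _ [u hu <-]; apply: LUe; exact: lL.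
  - by apply: rtrans_closed => //; apply: cL.1.
  - by exists (add e x); exists e.
  - move=> u _ hu [v hv <-]; exists (add u v); first exact: sU.
    by rewrite YplusA.
have [u Lu uu] := ellis cL nL (fun x y hx hy => lL _ _ (LU _ hx) hy).
have ue : add u e = u.
  have [s _ <-] := LUe _ Lu; by rewrite YplusA ee.
exists (add e u); split.
- by apply: LU; exact: lL.
- by rewrite !YplusA -[add u (add e u)]YplusA ue uu.
- by rewrite YplusA ue.
- by rewrite -YplusA ee.
have Lq : L (add e u) by exact: lL.
split.
  move=> f Uf ff fq qf.
  have Lf : L f by rewrite -fq; exact: lL.
  have [s _ hs] := Lm _ Lf _ Lq.
  by rewrite -qf -hs YplusA ff.
move=> J [[j Jj] JU hJ].
have Ljq : L (add j (add e u)) by apply: lL => //; exact: JU.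
have Jjq : J (add j (add e u)) by have [] := hJ _ _ (LU _ Lq) Jj.
have [s Us hs] := Lm _ Ljq _ Lq.
by rewrite -hs; have [] := hJ _ _ Us Jjq.
Qed.

End Y.

Section Main.
Variables d l : nat.
Local Notation T := ('I_l -> set (set nat)).
Local Notation add := (Yplus l).

Lemma poly_pos (a : 'I_d.+1 -> nat) : (exists k, 0 < a k)%N ->
  forall i : 'I_l, (0 < \sum_(k < d.+1) a k * (i.+1) ^ k)%N.
Proof.
move=> [k hk] i; rewrite (bigD1 k) //= addn_gt0; apply/orP; left.
by rewrite muln_gt0 hk expn_gt0.
Qed.

Lemma So_Y : So d l `<=` Yset l.
Proof. by move=> _ [a [ha ->]] i; apply: pr_ultra; apply: poly_pos. Qed.

Lemma Io_So : Io d l `<=` So d l.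
Proof. by move=> _ [a [ha ->]]; exists a; split => //; exists ord0. Qed.

Lemma poly_add (a b : 'I_d.+1 -> nat) :
  add (poly_tuple d l a) (poly_tuple d l b) = poly_tuple d l (fun k => a k + b k)%N.
Proof.
apply: funext => i; rewrite /Yplus /poly_tuple /=.
rewrite (_ : (\sum_(k < d.+1) (a k + b k) * i.+1 ^ k)%N =
   (\sum_(k < d.+1) a k * i.+1 ^ k + \sum_(k < d.+1) b k * i.+1 ^ k)%N) //.
by rewrite -big_split /=; apply: eq_bigr => k _; rewrite mulnDl.
Qed.

Lemma cl_add (X Z W : set T) y z :
  (forall x, X x -> exists n : 'I_l -> nat, x = fun i => pr (n i)) ->
  (forall x z, X x -> Z z -> W (add x z)) ->
  Ycl l X y -> Ycl l Z z -> Ycl l W (add y z).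
Proof.
move=> Xp XZW [hy hcy] [hz hcz]; split; first exact: Yplus_set.
move=> A hA.
have [x Xx hx] := hcy (fun i => [set n | z i [set m | A i (n + m)%N]]) hA.
have [n en] := Xp _ Xx; subst x.
have [z' Zz' hz'] := hcz (fun i => [set m | A i (n i + m)%N]) hx.
by exists (add (fun i => pr (n i)) z'); [exact: XZW|].
Qed.

Lemma So_pr x : So d l x -> exists n : 'I_l -> nat, x = fun i => pr (n i).
Proof. by move=> [a [_ ->]]; eexists. Qed.

Lemma clSo_sub : is_subsemigroup add (Yset l) (Ycl l (So d l)).
Proof.
split.
- exists (poly_tuple d l (fun _ => 1%N)); apply: Ycl_sub; first exact: So_Y.
  by exists (fun _ => 1%N); split => //; exists ord0.
- by move=> y [].
- move=> x y hx hy; apply: cl_add hx hy; first exact: So_pr.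
  move=> _ _ [a [ha ->]] [b [hb ->]]; rewrite poly_add; exists (fun k => a k + b k)%N.
  split => //; have [k hk] := ha; exists k; rewrite addn_gt0 hk.
  by [].
Qed.

Lemma clIo_ideal : is_ideal add (Ycl l (So d l)) (Ycl l (Io d l)).
Proof.
split.
- exists (poly_tuple d l (fun _ => 1%N)); apply: Ycl_sub.
    by move=> x /Io_So; apply: So_Y.
  by exists (fun _ => 1%N); split.
- by apply: Ycl_mono; exact: Io_So.
- move=> x y hx hy; split.
  + apply: cl_add hx hy; first exact: So_pr.
    move=> _ _ [a [ha ->]] [b [hb ->]]; rewrite poly_add; exists (fun k => a k + b k)%N.
    by split => //; move=> k; rewrite addn_gt0 hb orbT.
  + apply: cl_add hy hx; first by move=> ? /Io_So; exact: So_pr.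
    move=> _ _ [a [ha ->]] [b [hb ->]]; rewrite poly_add; exists (fun k => a k + b k)%N.
    by split => //; move=> k; rewrite addn_gt0 ha.
Qed.

Lemma cst_cl r : is_ultra r -> Ycl l (So d l) (fun _ => r).
Proof.
move=> hr; split => // A hA.
have := ultra_bigI hr hA => /(ultra_I hr (ultra_pos hr)) /(ultra_ex hr) [n [n0 hn]].
exists (fun i => pr n).
  exists (fun k => if k == ord0 then n else 0%N); split; first by exists ord0; rewrite eqxx.
  apply: funext => i; rewrite /poly_tuple; congr pr.
  rewrite big_ord_recl /= big1 ?addn0 ?expn0 ?muln1 //.
  by move=> k; exact: (hn k).
Qed.

End Main.

Theorem mainTheorem6 (d l : nat) (hd : (0 < d)%N) (hdl : (d < l)%N) :
  is_subsemigroup (Yplus l) (Yset l) (Ycl l (So d l)) /\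
  is_ideal (Yplus l) (Ycl l (So d l)) (Ycl l (Io d l)) /\
  (forall p : set (set nat), smallest_ideal bplus betaN p ->
     smallest_ideal (Yplus l) (Ycl l (So d l)) (fun _ : 'I_l => p) /\
     Ycl l (Io d l) (fun _ : 'I_l => p)).
Proof.
split; first exact: clSo_sub.
split; first exact: clIo_ideal.
move=> p hp.
have i0 : 'I_l := Ordinal (ltn_trans hd hdl).
have cY : closedY (Yset l) by split => // y [].
have sY : subsg (Yset l) by move=> x y; exact: Yplus_set.
have [e0 Ye0 ee0] : exists2 e, Yset l e & Yplus l e e = e.
  apply: ellis => //; exists (fun _ => pr 1); move=> i; exact: pr_ultra.
have [q0 [Yq0 qq0 _ _ [q0min _]]] := min_idem cY sY Ye0 ee0.
pose e := q0 i0.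
have eU : is_ultra e := Yq0 i0.
have ee : bplus e e = e := congr1 (fun f => f i0) qq0.
have emin : forall f, is_ultra f -> bplus f f = f -> bplus f e = f -> bplus e f = f -> f = e.
  move=> f fU ff fe ef.
  pose q' := fun j => if j == i0 then f else q0 j.
  have qj : forall j, bplus (q0 j) (q0 j) = q0 j := fun j => congr1 (fun g => g j) qq0.
  have := q0min q' _ _ _ _.
  move=> /(_ _ _ _ _) /(congr1 (fun g => g i0)); rewrite /q' eqxx; apply.
  - by move=> j; rewrite /q'; case: eqP => // _; exact: Yq0.
  - by apply: funext => j; rewrite /Yplus /q'; case: eqP => _; [exact: ff|exact: qj].
  - by apply: funext => j; rewrite /Yplus /q'; case: eqP => [->|_]; [exact: fe|exact: qj].
  - by apply: funext => j; rewrite /Yplus /q'; case: eqP => [->|_]; [exact: ef|exact: qj].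
pose S := Ycl l (So d l).
have cS : closedY S := Ycl_closed _.
have sS : subsg S by have [_ _ h] := clSo_sub d l; exact: h.
have Se : S (fun _ => e) := cst_cl d l eU.
have eeS : Yplus l (fun _ => e) (fun _ => e) = (fun _ => e).
  by apply: funext => i; exact: ee.
have [q [Sq qq qe eq [_ qJ]]] := min_idem cS sS Se eeS.
have qe' : q = fun _ => e.
  apply: funext => i; apply: emin.
  - exact: cS.1 q Sq i.
  - exact: (congr1 (fun g => g i) qq).
  - exact: (congr1 (fun g => g i) qe).
  - exact: (congr1 (fun g => g i) eq).
have eJ : forall J, is_ideal (Yplus l) S J -> J (fun _ => e).
  by move=> J hJ; rewrite -qe'; exact: qJ.
have pJ : forall J, is_ideal (Yplus l) S J -> J (fun _ => p).
  move=> J hJ; have [_ JS hJJ] := hJ.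
  pose M := [set r | is_ultra r /\ J (fun _ => r)].
  have : M p.
    apply: hp; split.
    - by exists e; split => //; exact: eJ.
    - by move=> r [].
    - move=> x y xb [yU Jy]; have Sx := cst_cl d l xb.
      have [h1 h2] := hJJ _ _ Sx Jy.
      by split; split => //; apply: bplus_ultra.
  by case.
split; first exact: pJ.
exact: pJ _ (clIo_ideal d l).
Qed.
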